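(* Let $(\mathbf{x}^1,y_l^1,y_r^1),\dots,(\mathbf{x}^T,y_l^T,y_r^T)$ be a sequence of examples with $\mathbf{x}^t\in\mathbb{R}^d$ and integers $1\le y_l^t\le y_r^t\le K$, and run the PA algorithm on it starting from $\mathbf{w}^1=\mathbf{0}$, $\boldsymbol\theta^1=\mathbf{0}$. Let $c=\min_{t\in[T]}(y_r^t-y_l^t)$, $R^2=\max_{t\in[T]}\Vert\mathbf{x}^t\Vert^2$, $D=1+R^2(K-c-1)$, and let $\mathbf{v}=(\mathbf{u},\mathbf{b})$ with $\mathbf{u}\in\mathbb{R}^d$, $\mathbf{b}\in\mathbb{R}^{K-1}$ be the parameters of an arbitrary predictor, $\Vert\mathbf{v}\Vert^2=\Vert\mathbf{u}\Vert^2+\Vert\mathbf{b}\Vert^2$. Then $$\sum_{t=1}^T\sum_{i=1}^{K-1}(l_i^t)^2\le D^2\left(\Vert\mathbf{v}\Vert+4(K-c-1)\sqrt{\sum_{t=1}^T\sum_{i=1}^{K-1}(l_i^{t*})^2}\right)^2 .$$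
   Context: PA algorithm: at trial $t$, with current $(\mathbf{w}^t,\boldsymbol\theta^t)\in\mathbb{R}^d\times\mathbb{R}^{K-1}$, the new parameters $(\mathbf{w}^{t+1},\boldsymbol\theta^{t+1})$ are the unique minimizer of $\tfrac12\Vert\mathbf{w}-\mathbf{w}^t\Vert^2+\tfrac12\Vert\boldsymbol\theta-\boldsymbol\theta^t\Vert^2$ subject to $\mathbf{w}\cdot\mathbf{x}^t-\theta_i\ge1$ for $i=1,\dots,y_l^t-1$ and $\mathbf{w}\cdot\mathbf{x}^t-\theta_i\le-1$ for $i=y_r^t,\dots,K-1$. Losses of the algorithm at trial $t$: $l_i^t=\max(0,1+\theta_i^t-\mathbf{w}^t\cdot\mathbf{x}^t)$ for $1\le i\le y_l^t-1$, $l_i^t=\max(0,1+\mathbf{w}^t\cdot\mathbf{x}^t-\theta_i^t)$ for $y_r^t\le i\le K-1$, and $l_i^t=0$ for $y_l^t\le i\le y_r^t-1$. Losses of the fixed predictor $(\mathbf{u},\mathbf{b})$: $l_i^{t*}=\max(0,1-\mathbf{u}\cdot\mathbf{x}^t+b_i)$ for $1\le i\le y_l^t-1$, $l_i^{t*}=\max(0,1+\mathbf{u}\cdot\mathbf{x}^t-b_i)$ for $y_r^t\le i\le K-1$, and $0$ otherwise. *)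

(* Defs.v *)
From mathcomp Require Import all_boot all_order all_algebra.
From mathcomp Require Import reals.
Set Implicit Arguments. Unset Strict Implicit. Unset Printing Implicit Defensive.
Import Order.TTheory GRing.Theory Num.Theory.
Local Open Scope ring_scope.

Section PA.
Variable R : realType.

Definition dotv (n : nat) (a b : 'rV[R]_n) : R := \sum_(j < n) a 0 j * b 0 j.
Definition sqnorm (n : nat) (a : 'rV[R]_n) : R := dotv a a.

(* Thresholds theta_1..theta_{K-1} are stored 0-based: theta_{i+1} = th 0 i,
   for i : 'I_(K-1). *)

Definition PA_feasible (d K : nat) (x : 'rV[R]_d) (yl yr : nat)
    (w : 'rV[R]_d) (th : 'rV[R]_(K - 1)) : Prop :=
  forall i : 'I_(K - 1),
    ((i.+1 < yl)%N -> 1 <= dotv w x - th 0 i) /\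
    ((yr <= i.+1)%N -> dotv w x - th 0 i <= -1).

Definition PA_objective (d K : nat) (wt : 'rV[R]_d) (tht : 'rV[R]_(K - 1))
    (w : 'rV[R]_d) (th : 'rV[R]_(K - 1)) : R :=
  2^-1 * sqnorm (w - wt) + 2^-1 * sqnorm (th - tht).

Definition PA_update (d K : nat) (x : 'rV[R]_d) (yl yr : nat)
    (wt : 'rV[R]_d) (tht : 'rV[R]_(K - 1))
    (w' : 'rV[R]_d) (th' : 'rV[R]_(K - 1)) : Prop :=
  PA_feasible x yl yr w' th' /\
  forall (w : 'rV[R]_d) (th : 'rV[R]_(K - 1)),
    PA_feasible x yl yr w th ->
    PA_objective wt tht w' th' <= PA_objective wt tht w th.

(* The same formula gives both the algorithm's loss l_i^t (with (w^t,theta^t))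
   and the fixed predictor's loss l_i^{t*} (with (u,b)). *)
Definition loss (d K : nat) (w : 'rV[R]_d) (th : 'rV[R]_(K - 1))
    (x : 'rV[R]_d) (yl yr : nat) (i : 'I_(K - 1)) : R :=
  if (i.+1 < yl)%N then Num.max 0 (1 + th 0 i - dotv w x)
  else if (yr <= i.+1)%N then Num.max 0 (1 + dotv w x - th 0 i)
  else 0.

End PA.

(* Main.v *)
Require Import Defs.
From mathcomp Require Import all_boot all_order all_algebra.
From mathcomp Require Import reals.
From mathcomp Require Import ring lra zify.
Import Order.TTheory GRing.Theory Num.Theory.
Local Open Scope ring_scope.

Lemma cs_sum {R : realType} n (F G : 'I_n -> R) :
  (\sum_i F i * G i) ^+ 2 <= (\sum_i F i ^+ 2) * (\sum_i G i ^+ 2).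
Proof.
have A0 : 0 <= \sum_i F i ^+ 2 by apply: sumr_ge0 => i _; exact: sqr_ge0.
have key : \sum_i ((\sum_i F i ^+ 2) * G i - (\sum_i F i * G i) * F i) ^+ 2 =
   (\sum_i F i ^+ 2) * ((\sum_i F i ^+ 2) * (\sum_i G i ^+ 2) - (\sum_i F i * G i) ^+ 2).
  rewrite (eq_bigr (fun i => (\sum_i F i ^+ 2)^+2 * G i ^+2
     - (2 * (\sum_i F i ^+ 2) * (\sum_i F i * G i)) * (F i * G i)
     + (\sum_i F i * G i)^+2 * F i ^+2)); last by move=> i _; ring.
  rewrite big_split /= sumrB -!mulr_sumr; ring.
have K0 : 0 <= (\sum_i F i ^+ 2) * ((\sum_i F i ^+ 2) * (\sum_i G i ^+ 2) - (\sum_i F i * G i) ^+ 2).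
  by rewrite -key; apply: sumr_ge0 => i _; exact: sqr_ge0.
have [Ap|] := ltP 0 (\sum_i F i ^+ 2).
  by move: K0; rewrite pmulr_rge0 // subr_ge0.
move=> Ale; have A00 : \sum_i F i ^+ 2 = 0 by apply/eqP; rewrite eq_le Ale A0.
have F0 : forall i, F i = 0.
  move=> i; have H := @psumr_eq0P _ _ xpredT (fun i => F i ^+ 2) (fun j _ => sqr_ge0 (F j)) A00 i isT.
  by apply/eqP; move/eqP: H; rewrite expf_eq0.
rewrite big1 ?expr0n ?A00 ?mul0r //= => i _; by rewrite F0 mul0r.
Qed.


Lemma sqnorm_ge0 {R : realType} n (a : 'rV[R]_n) : 0 <= sqnorm a.
Proof. by apply: sumr_ge0 => j _; rewrite -expr2 sqr_ge0. Qed.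

Lemma dotv0r {R : realType} n (a : 'rV[R]_n) : dotv a 0 = 0.
Proof. by rewrite /dotv big1 // => j _; rewrite mxE mulr0. Qed.

Lemma dotv_lin1 {R : realType} n (a b x : 'rV[R]_n) (s : R) :
  dotv (a + s *: (b - a)) x = dotv a x + s * (dotv b x - dotv a x).
Proof.
rewrite /dotv -sumrB mulr_sumr -big_split /=; apply: eq_bigr => j _; rewrite !mxE; ring.
Qed.

Lemma sqnorm_lin {R : realType} n (a c d : 'rV[R]_n) (s : R) :
  sqnorm ((a + s *: c) - d) = sqnorm (a - d) + 2 * s * dotv (a - d) c + s ^+ 2 * sqnorm c.
Proof.
rewrite /sqnorm /dotv !mulr_sumr -!big_split /=; apply: eq_bigr => j _; rewrite !mxE; ring.
Qed.

Lemma sqnorm_diff {R : realType} n (a a' c c' : 'rV[R]_n) :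
  sqnorm (a - c) - sqnorm (a' - c) =
  sqnorm (a' - a) + 2 * dotv (a' - a) (c' - a') + 2 * dotv (a' - a) (c - c').
Proof.
rewrite /sqnorm /dotv -sumrB !mulr_sumr -!big_split /=; apply: eq_bigr => j _; rewrite !mxE; ring.
Qed.

Lemma pa_vi {R : realType} d K (x : 'rV[R]_d) (yl yr : nat) (wt w' wz : 'rV[R]_d) (tht th' thz : 'rV[R]_(K - 1)) :
  PA_update x yl yr wt tht w' th' -> PA_feasible x yl yr wz thz ->
  0 <= dotv (w' - wt) (wz - w') + dotv (th' - tht) (thz - th').
Proof.
move=> [Hf Hopt] Hz.
set X := dotv (w' - wt) (wz - w') + dotv (th' - tht) (thz - th').
set Y := 2^-1 * (sqnorm (wz - w') + sqnorm (thz - th')).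
have Y0 : 0 <= Y by rewrite mulr_ge0 ?invr_ge0 ?ler0n ?addr_ge0 ?sqnorm_ge0.
have H : forall s, 0 < s -> s <= 1 -> 0 <= s * X + s ^+ 2 * Y.
  move=> s s0 s1.
  have Hfs : PA_feasible x yl yr (w' + s *: (wz - w')) (th' + s *: (thz - th')).
    move=> i; rewrite dotv_lin1 !mxE.
    have [h1 h2] := Hf i; have [h3 h4] := Hz i.
    split=> hi.
      have := h1 hi; have := h3 hi; nra.
    have := h2 hi; have := h4 hi; nra.
  have := Hopt _ _ Hfs; rewrite /PA_objective !sqnorm_lin.
  set A1 := sqnorm (w' - wt); set A2 := sqnorm (th' - tht).
  move=> h; rewrite -subr_ge0 in h; move: h.
  suff -> : 2^-1 * (A1 + 2 * s * dotv (w' - wt) (wz - w') + s ^+ 2 * sqnorm (wz - w')) +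
   2^-1 * (A2 + 2 * s * dotv (th' - tht) (thz - th') + s ^+ 2 * sqnorm (thz - th')) -
   (2^-1 * A1 + 2^-1 * A2) = s * X + s ^+ 2 * Y by [].
  by rewrite /X /Y; field.
have [Xn|//] := ltP X 0.
exfalso.
have YX : 0 < Y - X by lra.
pose sg := - X / (Y - X).
have e : sg * (Y - X) = - X by rewrite /sg divfK // gt_eqF.
have sp0 : 0 < sg by rewrite /sg divr_gt0 // oppr_gt0.
have sp1 : sg <= 1 by rewrite /sg ler_pdivrMr // mul1r; lra.
have E : sg * X + sg ^+ 2 * Y = sg ^+ 2 * X + sg * (sg * (Y - X) + X) by ring.
rewrite e addNr mulr0 addr0 in E.
have : sg ^+ 2 * X < 0 by rewrite pmulr_rlt0 // exprn_gt0.
have := H sg sp0 sp1; rewrite E; lra.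
Qed.


Lemma max_sq {R : realType} (y z : R) : y <= z -> Num.max 0 y ^+ 2 <= z ^+ 2.
Proof.
move=> h; case: (boolP (y <= 0)) => hy.
  by rewrite (max_l hy) expr0n sqr_ge0.
have hy' : 0 <= y by rewrite ltW // ltNge.
rewrite (max_r hy'); nra.
Qed.

Lemma count_act n a b : (a <= b)%N ->
  (\sum_(i < n) (((i.+1 < a) || (b <= i.+1)) : nat))%N = (minn (a - 1) n + (n - (b - 1)))%N.
Proof.
move=> ab; elim: n => [|n IH]; first by rewrite big_ord0 minn0 sub0n.
rewrite big_ord_recr /= IH.
case: (ltnP n.+1 a) => h1; case: (leqP b n.+1) => h2 /=; lia.
Qed.


Lemma dot_cs {R : realType} n (a b : 'rV[R]_n) : dotv a b ^+ 2 <= sqnorm a * sqnorm b.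
Proof.
have := @cs_sum R n (fun j => a 0 j) (fun j => b 0 j).
have e1 : forall c : 'rV[R]_n, \sum_j c 0 j ^+ 2 = sqnorm c.
  by move=> c; apply: eq_bigr => j _; rewrite expr2.
by rewrite !e1.
Qed.

Lemma step_loss {R : realType} d K (x : 'rV[R]_d) (yl yr : nat) (wt w' : 'rV[R]_d)
  (tht th' : 'rV[R]_(K - 1)) (R2 m : R) :
  PA_feasible x yl yr w' th' -> (1 <= yl)%N -> (yl <= yr)%N -> (yr <= K)%N ->
  sqnorm x <= R2 -> ((K - 1 - (yr - yl))%N)%:R <= m ->
  \sum_i loss wt tht x yl yr i ^+ 2 <= (1 + m * R2) * (sqnorm (w' - wt) + sqnorm (th' - tht)).
Proof.
move=> Hf h1 h2 h3 HR Hm.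
pose p := dotv (w' - wt) x.
pose q (i : 'I_(K-1)) := th' 0 i - tht 0 i.
pose io (i : 'I_(K-1)) : R := ((((i.+1 < yl)%N || (yr <= i.+1)%N)) : nat)%:R.
have io01 i : io i * io i = io i by rewrite /io; case: (_ || _); rewrite ?mul1r ?mul0r.
have io0 i : 0 <= io i by rewrite ler0n.
have io1 i : io i <= 1 by rewrite /io; case: (_||_); rewrite ?lexx ?ler01.
have Hp : p = dotv w' x - dotv wt x.
  by rewrite /p /dotv -sumrB; apply: eq_bigr => j _; rewrite !mxE; ring.
have st1 : \sum_i loss wt tht x yl yr i ^+ 2 <= \sum_i io i * (p - q i) ^+ 2.
  apply: ler_sum => i _; rewrite /loss /io; have [hA hB] := Hf i.
  case: ifP => ha.
    rewrite /= mul1r; apply: max_sq; have := hA ha; rewrite Hp /q; lra.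
  case: ifP => hb.
    rewrite /= mul1r -[(p - q i) ^+ 2]sqrrN opprB; apply: max_sq; have := hB hb; rewrite Hp /q; lra.
  by rewrite /= mul0r expr0n.
have st2 : \sum_i io i * (p - q i) ^+ 2 =
   p ^+ 2 * (\sum_i io i) - 2 * p * (\sum_i io i * q i) + \sum_i io i * q i ^+ 2.
  rewrite (eq_bigr (fun i => p^+2 * io i - (2 * p) * (io i * q i) + io i * q i ^+2)); last by move=> i _; ring.
  by rewrite big_split /= sumrB -!mulr_sumr.
set k := \sum_i io i.
set B := \sum_i io i * q i.
set Q' := \sum_i io i * q i ^+ 2.
set W := sqnorm (w' - wt).
set Q := sqnorm (th' - tht).
have k0 : 0 <= k by apply: sumr_ge0.
have km : k <= m.
  apply: le_trans Hm; rewrite /k /io -natr_sum ler_nat count_act //; lia.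
have QQ : Q' <= Q.
  have -> : Q = \sum_i q i ^+ 2 by rewrite /Q /sqnorm /dotv; apply: eq_bigr => j _; rewrite !mxE /q expr2.
  apply: ler_sum => i _; have := io1 i; have := io0 i; have := sqr_ge0 (q i); nra.
have Q'0 : 0 <= Q' by apply: sumr_ge0 => i _; rewrite mulr_ge0 ?sqr_ge0.
have BkQ : B ^+ 2 <= k * Q'.
  have := @cs_sum R _ io (fun i => io i * q i).
  have -> : \sum_i io i * (io i * q i) = B by apply: eq_bigr => i _; rewrite mulrA io01.
  have -> : \sum_i io i ^+ 2 = k by apply: eq_bigr => i _; rewrite expr2 io01.
  have -> : \sum_i (io i * q i) ^+ 2 = Q' by apply: eq_bigr => i _; rewrite exprMn expr2 io01.
  by [].
have pW : p ^+ 2 <= R2 * W.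
  have hc := @dot_cs R _ (w' - wt) x.
  have hc2 : sqnorm (w' - wt) * sqnorm x <= sqnorm (w' - wt) * R2 by rewrite ler_wpM2l ?sqnorm_ge0.
  rewrite /p /W; lra.
have W0 : 0 <= W by apply: sqnorm_ge0.
have Q0 : 0 <= Q by apply: sqnorm_ge0.
have R20 : 0 <= R2 by apply: le_trans HR; apply: sqnorm_ge0.
have m0 : 0 <= m by apply: le_trans km.
have a1 : p ^+ 2 * k <= R2 * W * m by apply: ler_pM; rewrite ?sqr_ge0.
have a2 : B ^+ 2 <= m * Q.
  apply: le_trans BkQ _; apply: ler_pM => //.
have a3 : p ^+ 2 * B ^+ 2 <= (R2 * W) * (m * Q) by apply: ler_pM; rewrite ?sqr_ge0.
have a4 : (2 * p * B) ^+ 2 <= (W + m * R2 * Q) ^+ 2.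
  have : 0 <= (W - m * R2 * Q) ^+ 2 by apply: sqr_ge0.
  have -> : (2 * p * B) ^+ 2 = 4 * (p ^+ 2 * B ^+ 2) by ring.
  nra.
have a5 : - (2 * p * B) <= W + m * R2 * Q.
  have Z0 : 0 <= W + m * R2 * Q by rewrite addr_ge0 // !mulr_ge0.
  nra.
apply: (le_trans st1); rewrite st2.
have -> : (1 + m * R2) * (W + Q) = W + Q + R2 * W * m + m * R2 * Q by ring.
rewrite -/k -/Q' -/B.
lra.
Qed.


Lemma ge_max0 {R : realType} (y : R) : y <= Num.max 0 y.
Proof.
case: (boolP (y <= 0)) => hy; first by rewrite (max_l hy).
have hy' : 0 <= y by rewrite ltW // ltNge.
by rewrite (max_r hy').
Qed.

Lemma sq_neg {R : realType} (z s : R) : 0 <= s -> z ^+ 2 <= s ^+ 2 -> - z <= s.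
Proof. move=> s0 h; nra. Qed.

Lemma step_tele {R : realType} d K (x : 'rV[R]_d) (yl yr : nat) (wt w' u : 'rV[R]_d)
  (tht th' b : 'rV[R]_(K - 1)) :
  PA_update x yl yr wt tht w' th' -> (yl <= yr)%N ->
  (sqnorm (w' - wt) + sqnorm (th' - tht)) -
    2 * Num.sqrt ((sqnorm (w' - wt) + sqnorm (th' - tht)) * \sum_i loss u b x yl yr i ^+ 2)
  <= (sqnorm (wt - u) + sqnorm (tht - b)) - (sqnorm (w' - u) + sqnorm (th' - b)).
Proof.
move=> Hu hlr.
pose e := \row_i (if (i.+1 < yl)%N then loss u b x yl yr i else - loss u b x yl yr i)
  : 'rV[R]_(K - 1).
have Hz : PA_feasible x yl yr u (b - e).
  move=> i; rewrite !mxE; split => hi.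
    rewrite hi /loss hi; have := @ge_max0 R (1 + b 0 i - dotv u x); lra.
  have hl : (i.+1 < yl)%N = false by apply/negbTE; rewrite -leqNgt; lia.
  rewrite hl /loss hl hi; have := @ge_max0 R (1 + dotv u x - b 0 i); lra.
have VI := @pa_vi R d K x yl yr wt w' u tht th' (b - e) Hu Hz.
have eL : sqnorm e = \sum_i loss u b x yl yr i ^+ 2.
  rewrite /sqnorm /dotv; apply: eq_bigr => i _; rewrite mxE.
  by case: ifP => _; rewrite ?mulrNN expr2.
have cs := @dot_cs R _ (th' - tht) e.
rewrite eL in cs.
have E1 := @sqnorm_diff R _ wt w' u u.
have E2 := @sqnorm_diff R _ tht th' b (b - e).
rewrite subrr dotv0r mulr0 addr0 in E1.
have bb : b - (b - e) = e by rewrite opprB addrC subrK.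
rewrite bb in E2.
set S := sqnorm (w' - wt) + sqnorm (th' - tht).
set L := \sum_i loss u b x yl yr i ^+ 2.
have L0 : 0 <= L by apply: sumr_ge0 => i _; apply: sqr_ge0.
have W0 := @sqnorm_ge0 R _ (w' - wt).
have Q0 := @sqnorm_ge0 R _ (th' - tht).
have S0 : 0 <= S by rewrite addr_ge0.
have hz : - dotv (th' - tht) e <= Num.sqrt (S * L).
  apply: sq_neg; first exact: sqrtr_ge0.
  rewrite sqr_sqrtr ?mulr_ge0 //; apply: le_trans cs _.
  by rewrite ler_wpM2r // /S lerDr.
move: VI E1 E2 hz; rewrite -/L /S; lra.
Qed.


Lemma my_bigmin_seq (I : eqType) (r : seq I) (F : I -> nat) (K : nat) (t : I) :
  t \in r -> (\big[minn/K]_(i <- r) F i <= F t)%N.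
Proof.
elim: r => [//|a r IH]; rewrite in_cons big_cons => /orP [/eqP ->|h].
  exact: geq_minl.
by apply: leq_trans (geq_minr _ _) (IH h).
Qed.

Lemma my_bigmin_le (f : nat -> nat) (K n t : nat) : (t < n)%N ->
  (\big[minn/K]_(i < n) f i <= f t)%N.
Proof.
move=> ht; exact: (@my_bigmin_seq _ _ (fun i : 'I_n => f i) K (Ordinal ht) (mem_index_enum _)).
Qed.

Lemma my_bigmax_seq {R : realType} (I : eqType) (r : seq I) (F : I -> R) (t : I) :
  t \in r -> F t <= \big[Num.max/0]_(i <- r) F i.
Proof.
elim: r => [//|a r IH]; rewrite in_cons big_cons => /orP [/eqP ->|h].
  by rewrite le_max lexx.
by apply: le_trans (IH h) _; rewrite le_max lexx orbT.
Qed.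

Lemma my_bigmax_ge {R : realType} (g : nat -> R) (n t : nat) : (t < n)%N ->
  g t <= \big[Num.max/0]_(i < n) g i.
Proof.
move=> ht; exact: (@my_bigmax_seq R _ _ (fun i : 'I_n => g i) (Ordinal ht) (mem_index_enum _)).
Qed.

Lemma my_bigmax_ge0 {R : realType} (g : nat -> R) (n : nat) :
  0 <= \big[Num.max/0]_(i < n) g i.
Proof.
apply: (big_rec (fun x => 0 <= x)) => // i x _ hx.
by rewrite le_max hx orbT.
Qed.

Lemma telesc {R : realType} (V : nat -> R) n : \sum_(t < n) (V t - V t.+1) = V 0%N - V n.
Proof.
elim: n => [|n IH]; first by rewrite big_ord0 subrr.
by rewrite big_ord_recr /= IH; ring.
Qed.

Lemma sqnormN {R : realType} n (a : 'rV[R]_n) : sqnorm (0 - a) = sqnorm a.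
Proof. by apply: eq_bigr => j _; rewrite !mxE sub0r mulrNN. Qed.


Theorem theorem4 (R : realType) (d K T : nat)
    (x : nat -> 'rV[R]_d) (yl yr : nat -> nat)
    (w : nat -> 'rV[R]_d) (th : nat -> 'rV[R]_(K - 1))
    (u : 'rV[R]_d) (b : 'rV[R]_(K - 1)) :
  (forall t, (t < T)%N -> (1 <= yl t)%N /\ (yl t <= yr t)%N /\ (yr t <= K)%N) ->
  w 0%N = 0 -> th 0%N = 0 ->
  (forall t, (t < T)%N ->
     PA_update (x t) (yl t) (yr t) (w t) (th t) (w t.+1) (th t.+1)) ->
  let c : nat := \big[minn/K]_(t < T) (yr t - yl t)%N in
  let R2 : R := \big[Num.max/0]_(t < T) sqnorm (x t) in
  let D : R := 1 + R2 * ((K - c - 1)%N)%:R in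
  let normv : R := Num.sqrt (sqnorm u + sqnorm b) in
  \sum_(t < T) \sum_(i < K - 1) (loss (w t) (th t) (x t) (yl t) (yr t) i) ^+ 2
  <= D ^+ 2 * (normv + 4 * ((K - c - 1)%N)%:R *
       Num.sqrt (\sum_(t < T) \sum_(i < K - 1) (loss u b (x t) (yl t) (yr t) i) ^+ 2)) ^+ 2.
Proof.
move=> Hy Hw0 Hth0 Hupd; cbv zeta.
set c := \big[minn/K]_(t < T) (yr t - yl t)%N.
set R2 := \big[Num.max/0]_(t < T) sqnorm (x t).
set normv := Num.sqrt (sqnorm u + sqnorm b).
set D := 1 + R2 * ((K - c - 1)%N)%:R.
have cle : forall t, (t < T)%N -> (c <= yr t - yl t)%N.
  by move=> t ht; rewrite /c; exact: (my_bigmin_le (fun t => (yr t - yl t)%N) K T t ht).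
have R2ge : forall t, (t < T)%N -> sqnorm (x t) <= R2.
  by move=> t ht; rewrite /R2; exact: (@my_bigmax_ge R (fun t => sqnorm (x t)) T t ht).
have R20 : 0 <= R2 by rewrite /R2; exact: (@my_bigmax_ge0 R (fun t => sqnorm (x t)) T).
have RHS0 : 0 <= D ^+ 2 * (normv + 4 * ((K - c - 1)%N)%:R *
       Num.sqrt (\sum_(t < T) \sum_(i < K - 1) (loss u b (x t) (yl t) (yr t) i) ^+ 2)) ^+ 2.
  by rewrite mulr_ge0 ?sqr_ge0.
have [m0|mpos] := posnP (K - c - 1).
  rewrite big1 // => t _; rewrite big1 // => i _.
  have [h1 [h2 h3]] := Hy t (ltn_ord t); have := cle t (ltn_ord t).
  have := ltn_ord i => hi hc.
  rewrite /loss ifF; last by apply/negbTE; rewrite -leqNgt; lia.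
  by rewrite ifF ?expr0n //; apply/negbTE; rewrite -ltnNge; lia.
pose m : R := ((K - c - 1)%N)%:R.
have m1 : 1 <= m by rewrite /m ler1n.
have D1 : 1 <= D by rewrite /D lerDl mulr_ge0 // ler0n.
pose S t := sqnorm (w t.+1 - w t) + sqnorm (th t.+1 - th t).
pose L t := \sum_(i < K - 1) loss u b (x t) (yl t) (yr t) i ^+ 2.
pose V t := sqnorm (w t - u) + sqnorm (th t - b).
have stA : forall t : 'I_T,
    \sum_(i < K - 1) loss (w t) (th t) (x t) (yl t) (yr t) i ^+ 2 <= D * S t.
  move=> t; have [h1 [h2 h3]] := Hy t (ltn_ord t).
  have [Hf _] := Hupd t (ltn_ord t).
  have := @step_loss R d K (x t) (yl t) (yr t) (w t) (w t.+1) (th t) (th t.+1) R2 m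
    Hf h1 h2 h3 (R2ge t (ltn_ord t)).
  have hm : ((K - 1 - (yr t - yl t))%N)%:R <= m.
    rewrite /m ler_nat; have := cle t (ltn_ord t); lia.
  by move=> /(_ hm); rewrite /D -/m (mulrC R2 m).
have stB : forall t : 'I_T, S t - 2 * Num.sqrt (S t * L t) <= V t - V t.+1.
  move=> t; have [h1 [h2 h3]] := Hy t (ltn_ord t).
  exact: (@step_tele R d K (x t) (yl t) (yr t) (w t) (w t.+1) u (th t) (th t.+1) b
    (Hupd t (ltn_ord t)) h2).
have S0 : forall t, 0 <= S t by move=> t; rewrite addr_ge0 ?sqnorm_ge0.
have L0 : forall t, 0 <= L t by move=> t; apply: sumr_ge0 => i _; apply: sqr_ge0.
pose Sa := \sum_(t < T) S t.
pose La := \sum_(t < T) L t.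
have eLa : \sum_(t < T) \sum_(i < K - 1) loss u b (x t) (yl t) (yr t) i ^+ 2 = La by [].
rewrite eLa.
have Sa0 : 0 <= Sa by apply: sumr_ge0.
have La0 : 0 <= La by apply: sumr_ge0.
have sum1 : Sa - 2 * \sum_(t < T) Num.sqrt (S t * L t) <= V 0%N - V T.
  have : \sum_(t < T) (S t - 2 * Num.sqrt (S t * L t)) <= \sum_(t < T) (V t - V t.+1).
    by apply: ler_sum => t _; exact: stB t.
  by rewrite telesc sumrB -mulr_sumr.
have V0 : V 0%N = normv ^+ 2.
  rewrite /V Hw0 Hth0 !sqnormN /normv sqr_sqrtr //.
  by rewrite addr_ge0 ?sqnorm_ge0.
have VT : 0 <= V T by rewrite addr_ge0 ?sqnorm_ge0.
have CSr : \sum_(t < T) Num.sqrt (S t * L t) <= Num.sqrt Sa * Num.sqrt La.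
  have e : \sum_(t < T) Num.sqrt (S t * L t) =
      \sum_(t < T) Num.sqrt (S t) * Num.sqrt (L t).
    by apply: eq_bigr => t _; rewrite sqrtrM.
  have := @cs_sum R T (fun t => Num.sqrt (S t)) (fun t => Num.sqrt (L t)).
  have e1 : \sum_(t < T) Num.sqrt (S t) ^+ 2 = Sa.
    by apply: eq_bigr => t _; rewrite sqr_sqrtr.
  have e2 : \sum_(t < T) Num.sqrt (L t) ^+ 2 = La.
    by apply: eq_bigr => t _; rewrite sqr_sqrtr.
  rewrite e1 e2 -e => hX.
  have X0 : 0 <= \sum_(t < T) Num.sqrt (S t * L t) by apply: sumr_ge0 => t _; exact: sqrtr_ge0.
  have Y0 : 0 <= Num.sqrt Sa * Num.sqrt La by rewrite mulr_ge0 ?sqrtr_ge0.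
  have hY : (Num.sqrt Sa * Num.sqrt La) ^+ 2 = Sa * La by rewrite exprMn !sqr_sqrtr.
  rewrite -hY in hX.
  move: hX X0 Y0; set X := \sum_(t < T) _; set Y := Num.sqrt Sa * Num.sqrt La.
  move=> hX X0 Y0; nra.
have sS : Num.sqrt Sa ^+ 2 = Sa by rewrite sqr_sqrtr.
have s0 := sqrtr_ge0 Sa.
have l0 := sqrtr_ge0 La.
have N0 : 0 <= normv by apply: sqrtr_ge0.
move: sum1 CSr V0 VT sS s0 l0 N0.
set s := Num.sqrt Sa; set l := Num.sqrt La; set N := normv.
set Z := \sum_(t < T) Num.sqrt (S t * L t).
move=> sum1 CSr V0 VT sS s0 l0 N0.
have h0 : s ^+ 2 - 2 * s * l <= N ^+ 2 by nra.
have h1 : s <= N + 2 * l by nra.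
have h2 : Sa <= (N + 2 * l) ^+ 2 by nra.
have h3 : N + 2 * l <= N + 4 * m * l by nra.
have h4 : (N + 2 * l) ^+ 2 <= (N + 4 * m * l) ^+ 2 by nra.
have LHS : \sum_(t < T) \sum_(i < K - 1) loss (w t) (th t) (x t) (yl t) (yr t) i ^+ 2
    <= D * Sa.
  rewrite /Sa mulr_sumr; apply: ler_sum => t _; exact: stA t.
apply: (le_trans LHS); rewrite -/m.
have h5 : D * Sa <= D * (N + 4 * m * l) ^+ 2.
  rewrite ler_wpM2l //; [lra | exact: le_trans h2 h4].
apply: (le_trans h5).
have Y2 := sqr_ge0 (N + 4 * m * l).
have DD : D <= D ^+ 2 by rewrite expr2 -[X in X <= _]mul1r ler_wpM2r //; lra.
by rewrite ler_wpM2r.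
Qed.
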